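(* Let $Q(z)\not\equiv0$ be a $k\times k$ Hermite matrix of Laurent polynomials that is diagonally dominant and satisfies $\operatorname{len}(Q_{1,1})\le\dots\le\operatorname{len}(Q_{k,k})$. Let $b(z)$ be a column vector of $k$ Laurent polynomials such that $\operatorname{ldeg}(b_\ell)\ge\operatorname{ldeg}(Q_{\ell,\ell})$ for every $\ell$ with $b_\ell\not\equiv0$. Then there exists a column vector $X(z)$ of $k$ Laurent polynomials such that $Y(z):=b(z)-Q(z)X(z)$ satisfies, for all $\ell=1,\dots,k$, $$\operatorname{fs}(Y_\ell)\subsetneq\operatorname{fs}(Q_{\ell,\ell})\quad\text{and}\quad\deg(Y_\ell)<\deg(Q_{\ell,\ell}).$$
   Context: For a matrix $U(z)=\sum_kU_kz^k$ of Laurent polynomials, $U^\star(z):=\sum_k\overline{U_k}^Tz^{-k}$; Hermite means $Q^\star=Q$. For a Laurent polynomial $u\not\equiv0$: $\deg(u)$ is its highest degree, $\operatorname{ldeg}(u)$ its lowest degree, $\operatorname{len}(u):=\deg(u)-\operatorname{ldeg}(u)$, $\operatorname{fs}(u):=[\operatorname{ldeg}(u),\deg(u)]$; for $u\equiv0$, $\operatorname{len}(u)=\deg(u):=-\infty$ and $\operatorname{fs}(u):=\emptyset$. A $k\times k$ matrix $Q$ of Laurent polynomials is diagonally dominant at the diagonal entry $s$ if (1) for all $i\ne s$: $\operatorname{fs}(Q_{i,s})\subsetneq\operatorname{fs}(Q_{s,s})$ and $\operatorname{fs}(Q_{s,i})\subsetneq\operatorname{fs}(Q_{s,s})$; (2)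 for all $i>s$: $\deg(Q_{s,i})<\deg(Q_{s,s})$. $Q$ is diagonally dominant if this holds at every diagonal entry. *)

(* Defs.v *)
From HB Require Import structures.
From mathcomp Require Import all_boot all_order all_algebra.
Set Implicit Arguments. Unset Strict Implicit. Unset Printing Implicit Defensive.
Import Order.TTheory GRing.Theory Num.Theory.
Local Open Scope ring_scope.

Section Laurent.
Variable C : numClosedFieldType.

(* u = lpoly u (z) * z ^ (lshift u) *)
Record laurent := Laurent { lpoly : {poly C}; lshift : int }.

Definition lcoef (u : laurent) (n : int) : C :=
  match (n - lshift u)%R with Posz i => (lpoly u)`_i | Negz _ => 0 end.

Definition lnull (u : laurent) : bool := lpoly u == 0.

Definition leqv (u v : laurent) : Prop := forall n, lcoef u n = lcoef v n.

Definition lzero : laurent := Laurent 0 0.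
Definition ladd (u v : laurent) : laurent :=
  let s := Order.min (lshift u) (lshift v) in
  Laurent (lpoly u * 'X^(`|lshift u - s|%N) + lpoly v * 'X^(`|lshift v - s|%N)) s.
Definition lopp (u : laurent) : laurent := Laurent (- lpoly u) (lshift u).
Definition lsub (u v : laurent) : laurent := ladd u (lopp v).
Definition lmul (u v : laurent) : laurent :=
  Laurent (lpoly u * lpoly v) (lshift u + lshift v).
(* u^*(z) = sum_k conj(u_k) z^{-k} *)
Definition lstar (u : laurent) : laurent :=
  let p := lpoly u in let d := (size p).-1 in
  Laurent (\poly_(i < size p) (p`_(d - i))^*) (- (lshift u + d%:Z)).

(* deg, ldeg, len for a nonzero u (values for u = 0 handled below) *)
Definition ldeg (u : laurent) : int := lshift u + (find (fun c => c != 0) (lpoly u))%:Z.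
Definition hdeg (u : laurent) : int := lshift u + ((size (lpoly u)).-1)%:Z.
(* deg and len with -oo encoded as None *)
Definition deg (u : laurent) : option int := if lnull u then None else Some (hdeg u).
Definition len (u : laurent) : option int :=
  if lnull u then None else Some (hdeg u - ldeg u).

Definition olt (a b : option int) : bool :=
  match a, b with
  | _, None => false | None, Some _ => true | Some x, Some y => x < y end.
Definition ole (a b : option int) : bool :=
  match a, b with
  | None, _ => true | Some _, None => false | Some x, Some y => x <= y end.

Definition in_fs (u : laurent) (n : int) : bool :=
  ~~ lnull u && (ldeg u <= n <= hdeg u).

Definition fs_ssub (u v : laurent) : Prop :=
  (forall n, in_fs u n -> in_fs v n) /\ (exists n, in_fs v n && ~~ in_fs u n).

Definition lmat (k : nat) := 'I_k -> 'I_k -> laurent.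
Definition lvec (k : nat) := 'I_k -> laurent.

Definition lmulmv (k : nat) (Q : lmat k) (X : lvec k) : lvec k :=
  fun i => \big[ladd/lzero]_(j < k) lmul (Q i j) (X j).

Definition hermite (k : nat) (Q : lmat k) : Prop :=
  forall i j, leqv (lstar (Q j i)) (Q i j).

Definition diag_dominant_at (k : nat) (Q : lmat k) (s : 'I_k) : Prop :=
  (forall i, i != s -> fs_ssub (Q i s) (Q s s) /\ fs_ssub (Q s i) (Q s s)) /\
  (forall i : 'I_k, (s < i)%N -> olt (deg (Q s i)) (deg (Q s s))).

Definition diag_dominant (k : nat) (Q : lmat k) : Prop :=
  forall s, diag_dominant_at Q s.

End Laurent.

(* Main.v *)
Require Import Defs.
From HB Require Import structures.
From mathcomp Require Import all_boot all_order all_algebra.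
From mathcomp Require Import zify ring.
Import Order.TTheory GRing.Theory Num.Theory.
Local Open Scope ring_scope.

Lemma L0 {C : numClosedFieldType} (u : laurent C) (N m : nat) :
  0 <= Defs.lshift u + N%:Z ->
  lcoef u (m%:Z - N%:Z) = (lpoly u * 'X^((absz (Defs.lshift u + N%:Z))))`_m.
Proof.
move=> H; rewrite /lcoef coefMXn.
case: ltnP => hm.
  have : m%:Z - N%:Z - Defs.lshift u < 0 by lia.
  by case: (m%:Z - N%:Z - Defs.lshift u) => x //; lia.
have -> : m%:Z - N%:Z - Defs.lshift u = Posz (m - absz (Defs.lshift u + N%:Z)%R)%N by lia.
by [].
Qed.

Lemma lcoef_low {C : numClosedFieldType} (u : laurent C) n : n < Defs.lshift u -> lcoef u n = 0.
Proof.
rewrite /lcoef => H; have : n - Defs.lshift u < 0 by lia.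
by case: (n - Defs.lshift u) => x //; lia.
Qed.

Lemma lcoef_opp {C : numClosedFieldType} (u : laurent C) n : lcoef (lopp u) n = - lcoef u n.
Proof. by rewrite /lcoef /=; case: (n - Defs.lshift u) => x; rewrite ?coefN ?oppr0. Qed.

Lemma lcoef_zero (C : numClosedFieldType) n : lcoef (lzero C) n = 0.
Proof. by rewrite /lcoef /=; case: (n - 0) => x; rewrite ?coef0. Qed.

Lemma lcoef_add {C : numClosedFieldType} (u v : laurent C) n :
  lcoef (ladd u v) n = lcoef u n + lcoef v n.
Proof.
set N := (absz (Defs.lshift u)%R + absz (Defs.lshift v)%R + absz n)%N.
have -> : n = ((absz (n + N%:Z)))%:Z - N%:Z by lia.
have hu : 0 <= Defs.lshift u + N%:Z by lia.
have hv : 0 <= Defs.lshift v + N%:Z by lia.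
have hs : 0 <= Defs.lshift (ladd u v) + N%:Z by rewrite /= /Order.min; case: ifP => _; lia.
rewrite !L0 // -coefD /=; congr (_`_ _).
rewrite mulrDl -!mulrA -!exprD; congr (_ * 'X^_ + _ * 'X^_);
  rewrite /Order.min; case: ifP => hc; lia.
Qed.

Lemma coef_nnull {C : numClosedFieldType} {u : laurent C} {n : int} : lcoef u n != 0 -> ~~ lnull u.
Proof.
rewrite /lcoef /lnull; case: (n - Defs.lshift u) => i //; last by rewrite eqxx.
by apply: contra => /eqP ->; rewrite coef0.
Qed.

Lemma coef_ldeg {C : numClosedFieldType} {u : laurent C} {n : int} : lcoef u n != 0 -> ldeg u <= n.
Proof.
rewrite /lcoef /ldeg; case E: (n - Defs.lshift u) => [i|i] //; last by rewrite eqxx.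
move=> nz; set f := find _ (lpoly u); have : (f <= i)%N.
  rewrite leqNgt; apply/negP => /(before_find (0:C)); by rewrite nz.
lia.
Qed.

Lemma coef_hdeg {C : numClosedFieldType} {u : laurent C} {n : int} : lcoef u n != 0 -> n <= hdeg u.
Proof.
rewrite /lcoef /hdeg; case E: (n - Defs.lshift u) => [i|i] //; last by rewrite eqxx.
move=> nz; have : (i < size (lpoly u))%N.
  rewrite ltnNge; apply: contra nz => /leq_sizeP ->; by [].
lia.
Qed.

Lemma lnz_coef {C : numClosedFieldType} {u : laurent C} : ~~ lnull u -> lcoef u (ldeg u) != 0.
Proof.
rewrite /lnull /lcoef /ldeg => nz.
set f := find _ (lpoly u).
have -> : Defs.lshift u + f%:Z - Defs.lshift u = Posz f by lia.
rewrite /f; apply: (@nth_find _ 0%R (fun c => c != 0%R) (lpoly u)); apply/hasP; exists (lead_coef (lpoly u)).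
  by rewrite lead_coefE mem_nth // prednK ?leqnn // size_poly_gt0.
by rewrite lead_coef_eq0.
Qed.

Lemma hnz_coef {C : numClosedFieldType} {u : laurent C} : ~~ lnull u -> lcoef u (hdeg u) != 0.
Proof.
rewrite /lnull /lcoef /hdeg => nz.
have -> : Defs.lshift u + ((size (lpoly u)).-1)%:Z - Defs.lshift u =
   Posz ((size (lpoly u)).-1) by lia.
by rewrite -lead_coefE lead_coef_eq0.
Qed.

Lemma fs_nnull {C : numClosedFieldType} (u v : laurent C) : fs_ssub u v -> ~~ lnull v.
Proof. by move=> [_ [n /andP [/andP [] ]]]. Qed.

Lemma coef_in_fs {C : numClosedFieldType} (u v : laurent C) n :
  fs_ssub u v -> lcoef u n != 0 -> ldeg v <= n <= hdeg v.
Proof.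
move=> [H _] nz.
have : in_fs v n by apply: H; rewrite /in_fs (coef_nnull nz) /= (coef_ldeg nz) (coef_hdeg nz).
by case/andP.
Qed.

Lemma olt_coef {C : numClosedFieldType} (u v : laurent C) n :
  ~~ lnull v -> olt (deg u) (deg v) -> lcoef u n != 0 -> n < hdeg v.
Proof.
rewrite /deg => /negbTE -> + nz; rewrite (negbTE (coef_nnull nz)) /=.
by have := coef_hdeg nz => h1 h2; lia.
Qed.

Lemma fs_from_coef {C : numClosedFieldType} (Y Qd : laurent C) :
  ~~ lnull Qd -> (forall n, lcoef Y n != 0 -> ldeg Qd <= n < hdeg Qd) ->
  fs_ssub Y Qd /\ olt (deg Y) (deg Qd).
Proof.
move=> nnQ H.
have lh : ldeg Qd <= hdeg Qd by apply: coef_hdeg; apply: lnz_coef.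
have [nY|nnY] := boolP (lnull Y).
  split; last by rewrite /deg nY (negbTE nnQ).
  split; first by move=> n; rewrite /in_fs nY.
  by exists (hdeg Qd); rewrite /in_fs nY nnQ lh lexx.
have := H _ (lnz_coef nnY); have := H _ (hnz_coef nnY) => /andP [h1 h2] /andP [h3 h4].
split; last by rewrite /deg (negbTE nnY) (negbTE nnQ) /=.
split.
  move=> n; rewrite /in_fs nnY nnQ /= => /andP [h5 h6]; apply/andP; split; lia.
exists (hdeg Qd); rewrite /in_fs nnY nnQ lh lexx /= negb_and; apply/orP; right.
rewrite -ltNge; lia.
Qed.
Lemma coefMZXn (C : fieldType) (p : {poly C}) (c : C) M n :
  (p * (c *: 'X^M))`_n = if (n < M)%N then 0 else c * p`_(n - M).
Proof.
rewrite -scalerAr coefZ coefMXn; case: ifP => _; [by rewrite mulr0 | by []].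
Qed.

Lemma poly_reduce (C : fieldType) k (P : 'I_k -> 'I_k -> {poly C}) (B : 'I_k -> {poly C}) (a h : 'I_k -> nat) :
 (forall i, (P i i)`_(h i) != 0) ->
 (forall i j n, (P i j)`_n != 0 -> (n <= h i)%N) ->
 (forall (i j : 'I_k) n, (i < j)%N -> (P i j)`_n != 0 -> (n < h i)%N) ->
 (forall i j n, (P i j)`_n != 0 -> (a i <= n)%N) ->
 (forall i n, (B i)`_n != 0 -> (a i <= n)%N) ->
 exists x : 'I_k -> {poly C}, forall i n, (B i - \sum_j P i j * x j)`_n != 0 -> (a i <= n < h i)%N.
Proof.
move=> Hd Hu Hs Hl Hb.
pose good (R : 'I_k -> {poly C}) := exists x : 'I_k -> {poly C},
  forall i n, (R i - \sum_j P i j * x j)`_n != 0 -> (a i <= n < h i)%N.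
have A : forall M (R : 'I_k -> {poly C}), (forall i n, (R i)`_n != 0 -> (a i <= n)%N) ->
   (forall i n, (R i)`_n != 0 -> (n < h i + M)%N) -> good R.
  elim=> [|M IHM] R lowR bR.
    exists (fun _ => 0) => i n; rewrite big1 ?subr0 => [nz|j _]; last by rewrite mulr0.
    by rewrite lowR //= -(addn0 (h i)) bR.
  have inner : forall d j (R : 'I_k -> {poly C}), (j + d = k)%N -> (forall i n, (R i)`_n != 0 -> (a i <= n)%N) ->
     (forall i n, (R i)`_n != 0 -> (n < h i + M + (j <= i))%N) -> good R.
    elim=> [|d IHd] j R0 ejk lowR0 bR0.
      apply: IHM => // i n nz; have := bR0 i n nz.
      have : (j <= i)%N = false by apply/negbTE; rewrite -ltnNge; have := ltn_ord i; lia.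
      by move=> ->; rewrite addn0.
    have jk : (j < k)%N by rewrite -ejk; lia.
    pose j0 := Ordinal jk.
    pose c := (R0 j0)`_(h j0 + M).
    pose m : {poly C} := (c / (P j0 j0)`_(h j0)) *: 'X^M.
    pose R' i := R0 i - P i j0 * m.
    have [x' Hx'] : good R'.
      apply: (IHd j.+1); first by rewrite -ejk; lia.
      - move=> i n; rewrite /R' coefB coefMZXn.
        case: ifP => [_|nM]; first by rewrite subr0; apply: lowR0.
        have [z|nz] := eqVneq ((P i j0)`_(n - M)) 0.
          by rewrite z mulr0 subr0; apply: lowR0.
        move=> _; have := Hl _ _ _ nz; lia.
      - move=> i n; rewrite /R' coefB coefMZXn.
        have [eij|nij] := eqVneq i j0.
          have [enh|neh] := eqVneq n (h j0 + M).
            rewrite enh eij ifN; last lia.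
            rewrite addnK /c mulfVK ?subrr ?eqxx //; exact: Hd.
          case: ifP => [_|nM].
            rewrite subr0 => nz; have := bR0 _ _ nz; rewrite eij /=; lia.
          have [z|nz] := eqVneq ((P i j0)`_(n - M)) 0.
            rewrite z mulr0 subr0 => nz; have := bR0 _ _ nz; rewrite eij /=; lia.
          move=> _; have := Hu _ _ _ nz; rewrite eij /=; lia.
        have ij : i != j :> nat by [].
        case: ifP => [_|nM].
          rewrite subr0 => nz; have := bR0 _ _ nz; lia.
        have [z|nz] := eqVneq ((P i j0)`_(n - M)) 0.
          rewrite z mulr0 subr0 => nz; have := bR0 _ _ nz; lia.
        move=> _; case: (ltnP i j) => ij'.
          have := Hs i j0 _ ij' nz; lia.
        have := Hu _ _ _ nz; lia.
    exists (fun i => x' i + (if i == j0 then m else 0)) => i n.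
    have -> : R0 i - \sum_j P i j * (x' j + (if j == j0 then m else 0)) =
             R' i - \sum_j P i j * x' j.
      rewrite /R' (eq_bigr (fun j => P i j * x' j + P i j * (if j == j0 then m else 0)));
        last by move=> j1 _; rewrite mulrDr.
      rewrite big_split /=.
      have -> : \sum_j P i j * (if j == j0 then m else 0) = P i j0 * m.
        rewrite (bigD1 j0) //= eqxx big1 ?addr0 // => j1 /negbTE ->; by rewrite mulr0.
      ring.
    exact: Hx'.
  apply: (inner k 0) => // i n nz; have := bR _ _ nz; lia.
apply: (A (\max_i size (B i))) => // i n nz.
have : (n < size (B i))%N.
  by rewrite ltnNge; apply: contra nz => /leq_sizeP ->.
have := @leq_bigmax _ (fun i => size (B i)) i. lia.
Qed.

Theorem lemmaA1 (C : numClosedFieldType) (k : nat) (Q : lmat C k) (b : lvec C k) :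
  (exists i j, ~~ lnull (Q i j)) ->
  hermite Q ->
  diag_dominant Q ->
  (forall i j : 'I_k, (i <= j)%N -> ole (len (Q i i)) (len (Q j j))) ->
  (forall l, ~~ lnull (b l) -> ldeg (Q l l) <= ldeg (b l)) ->
  exists X : lvec C k,
    forall l, let Y := lsub (b l) (lmulmv Q X l) in
      fs_ssub Y (Q l l) /\ olt (deg Y) (deg (Q l l)).
Proof.
move=> [i0 [j0 nz0]] _ Hdd _ Hb.
have Qnn : forall s, ~~ lnull (Q s s).
  move=> s; case: (pickP (fun i => i != s)) => [i ne|none].
    exact: fs_nnull (proj1 ((Hdd s).1 i ne)).
  have e1 : i0 = s by apply/eqP; have := none i0 => /negbFE.
  have e2 : j0 = s by apply/eqP; have := none j0 => /negbFE.
  by rewrite -{1}e1 -e2.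
have Hrow : forall i j n, lcoef (Q i j) n != 0 -> ldeg (Q i i) <= n <= hdeg (Q i i).
  move=> i j n nz; have [eij|nij] := eqVneq i j.
    by move: nz; rewrite -eij => nz; rewrite (coef_ldeg nz) (coef_hdeg nz).
  have nji : j != i by rewrite eq_sym.
  exact: coef_in_fs (proj2 ((Hdd i).1 j nji)) nz.
have Hstr : forall (i j : 'I_k) n, (i < j)%N -> lcoef (Q i j) n != 0 -> n < hdeg (Q i i).
  by move=> i j n ij nz; apply: olt_coef (Qnn i) ((Hdd i).2 j ij) nz.
have Hbl : forall l n, lcoef (b l) n != 0 -> ldeg (Q l l) <= n.
  move=> l n nz; apply: le_trans (Hb l (coef_nnull nz)) (coef_ldeg nz).
pose N := (\max_i \max_j absz (Defs.lshift (Q i j)) + \max_l absz (Defs.lshift (b l)))%N.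
have NQ : forall i j, 0 <= Defs.lshift (Q i j) + N%:Z.
  move=> i j; have := @leq_bigmax _ (fun j => absz (Defs.lshift (Q i j))) j.
  have := @leq_bigmax _ (fun i => \max_j absz (Defs.lshift (Q i j))) i.
  rewrite /N; lia.
have Nb : forall l, 0 <= Defs.lshift (b l) + N%:Z.
  move=> l; have := @leq_bigmax _ (fun l => absz (Defs.lshift (b l))) l.
  rewrite /N; lia.
have ldge : forall u : laurent C, Defs.lshift u <= ldeg u by move=> u; rewrite /ldeg; lia.
have hdge : forall u : laurent C, Defs.lshift u <= hdeg u by move=> u; rewrite /hdeg; lia.
pose P i j := lpoly (Q i j) * 'X^(absz (Defs.lshift (Q i j) + N%:Z)).
pose B l := lpoly (b l) * 'X^(absz (Defs.lshift (b l) + N%:Z)).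
pose a i := absz (ldeg (Q i i) + N%:Z).
pose h i := absz (hdeg (Q i i) + N%:Z).
have PE : forall i j m, (P i j)`_m = lcoef (Q i j) (m%:Z - N%:Z) by move=> *; rewrite L0.
have BE : forall l m, (B l)`_m = lcoef (b l) (m%:Z - N%:Z) by move=> *; rewrite L0.
have ha : forall i, (a i)%:Z = ldeg (Q i i) + N%:Z.
  by move=> i; have := ldge (Q i i); have := NQ i i; rewrite /a; lia.
have hh : forall i, (h i)%:Z = hdeg (Q i i) + N%:Z.
  by move=> i; have := hdge (Q i i); have := NQ i i; rewrite /h; lia.
have H1 : forall i, (P i i)`_(h i) != 0.
  move=> i; rewrite PE.
  have -> : (h i)%:Z - N%:Z = hdeg (Q i i) by rewrite hh; lia.
  exact: hnz_coef.
have H2 : forall i j n, (P i j)`_n != 0 -> (n <= h i)%N.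
  move=> i j n; rewrite PE => /Hrow; have := hh i; lia.
have H3 : forall (i j : 'I_k) n, (i < j)%N -> (P i j)`_n != 0 -> (n < h i)%N.
  move=> i j n ij; rewrite PE => /(Hstr _ _ _ ij); have := hh i; lia.
have H4 : forall i j n, (P i j)`_n != 0 -> (a i <= n)%N.
  move=> i j n; rewrite PE => /Hrow; have := ha i; lia.
have H5 : forall i n, (B i)`_n != 0 -> (a i <= n)%N.
  move=> i n; rewrite BE => /Hbl; have := ha i; lia.
have [x Hx] := @poly_reduce C k P B a h H1 H2 H3 H4 H5.
exists (fun j => Laurent (x j) 0) => l /=.
apply: fs_from_coef (Qnn l) _ => n.
have Ycoef : lcoef (lsub (b l) (lmulmv Q (fun j => Laurent (x j) 0) l)) n =
   lcoef (b l) n - \sum_j lcoef (lmul (Q l j) (Laurent (x j) 0)) n.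
  rewrite /lsub lcoef_add lcoef_opp /lmulmv.
  by rewrite (big_morph (fun u => lcoef u n) (fun u v => lcoef_add u v n) (lcoef_zero C n)).
rewrite Ycoef.
have [nN|nN] := ltP (n + N%:Z) 0.
  rewrite lcoef_low; last by have := Nb l; lia.
  rewrite big1 ?subr0 ?eqxx // => j _; apply: lcoef_low => /=; have := NQ l j; lia.
have -> : n = (absz (n + N%:Z))%:Z - N%:Z by lia.
have -> : lcoef (b l) ((absz (n + N%:Z))%:Z - N%:Z) -
    \sum_j lcoef (lmul (Q l j) (Laurent (x j) 0)) ((absz (n + N%:Z))%:Z - N%:Z) =
    (B l - \sum_j P l j * x j)`_(absz (n + N%:Z)).
  rewrite coefB coef_sum BE; congr (_ - _); apply: eq_bigr => j _.
  rewrite L0 /=; last by have := NQ l j; lia.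
  by rewrite addr0 mulrAC.
move=> /Hx; have := ha l; have := hh l; lia.
Qed.
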